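(* Run xOrder with criterion $F=\widehat G_0$ (i.e. $\lambda=0$). Then the output $o^*(n^a,n^b)$ is a cross-group ordering that maximizes $\mathrm{AUC}(o)$ (equivalently $\mathrm{AUC}(o)-\lambda\Delta\mathrm{xAUC}(o)$ with $\lambda=0$) over all cross-group orderings $o$ of $\mathrm{p}^a$ and $\mathrm{p}^b$.
   Context: Setting: two disjoint finite groups $a$, $b$ of samples, each sample $u$ having label $Y_u\in\{0,1\}$; $n^a,n^b$ group sizes, $n_1^a,n_0^a$ numbers of label-1/label-0 samples in $a$ (similarly for $b$), all $\ge1$, $n_1=n_1^a+n_1^b$, $n_0=n_0^a+n_0^b$, $k=n_0n_1$, $k_{a,b}=n_1^an_0^b$, $k_{b,a}=n_0^an_1^b$. Fixed within-group rankings $\mathrm{p}^a=(\mathrm{p}^{a(1)},\dots,\mathrm{p}^{a(n^a)})$, $\mathrm{p}^b=(\mathrm{p}^{b(1)},\dots,\mathrm{p}^{b(n^b)})$. A cross-group ordering is a ranked list of all samples of $a\cup b$ whose restrictions to $a,b$ are $\mathrm{p}^a,\mathrm{p}^b$; $\mathrm{AUC}(o)=\frac1{n_1n_0}\#\{(u,v):Y_u=1,Y_v=0,u\text{ above }v\text{ in }o\}$; $\mathrm{xAUC}_o(a,b)$ is the fraction of pairs (label-1 sample of $a$, label-0 sample of $b$) in which the first is ranked above the second, $\mathrm{xAUC}_o(b,a)$ symmetrically, $\Delta\mathrm{xAUC}(o)=|\mathrm{xAUC}_o(a,b)-\mathrm{xAUC}_o(b,a)|$. Partial orderings: for $0\le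 i\le n^a$, $0\le j\le n^b$, an $(i,j)$-partial ordering is a ranked list of $\mathrm{p}^{a(1)},\dots,\mathrm{p}^{a(i)},\mathrm{p}^{b(1)},\dots,\mathrm{p}^{b(j)}$ preserving the within-group orders. For such $o$ define $H_{ab}(o)$ as the number of pairs $(k,h)$ with $1\le k\le i$, $1\le h\le n^b$, $Y_{\mathrm{p}^{a(k)}}=1$, $Y_{\mathrm{p}^{b(h)}}=0$, and either $h>j$ or ($h\le j$ and $\mathrm{p}^{a(k)}$ precedes $\mathrm{p}^{b(h)}$ in $o$); and $H_{ba}(o)$ as the number of pairs $(h,k)$ with $1\le h\le j$, $1\le k\le n^a$, $Y_{\mathrm{p}^{b(h)}}=1$, $Y_{\mathrm{p}^{a(k)}}=0$, and either $k>i$ or ($k\le i$ and $\mathrm{p}^{b(h)}$ precedes $\mathrm{p}^{a(k)}$ in $o$). For $\lambda\ge0$ set $\widehat G_\lambda(o)=H_{ab}(o)+H_{ba}(o)-\lambda k\,\big|H_{ab}(o)/k_{a,b}-H_{ba}(o)/k_{b,a}\big|$, and $\widehat G_\infty(o)=-\big|H_{ab}(o)/k_{a,b}-H_{ba}(o)/k_{b,a}\big|$. (For $(i,j)=(n^a,n^b)$, $H_{ab}=k_{a,b}\mathrm{xAUC}_o(a,b)$ and $H_{ba}=k_{b,a}\mathrm{xAUC}_o(b,a)$.) xOrder with criterion $F$: set $o^*(i,0)=(\mathrm{p}^{a(1)},\dots,\mathrm{p}^{a(i)})$ and $o^*(0,j)=(\mathrm{p}^{b(1)},\dots,\mathrm{p}^{b(j)})$;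 for $i=1,\dots,n^a$ and (inner loop) $j=1,\dots,n^b$, let $c_a=o^*(i-1,j)\oplus\mathrm{p}^{a(i)}$ and $c_b=o^*(i,j-1)\oplus\mathrm{p}^{b(j)}$, where $\oplus$ appends an element at the bottom of the list, and set $o^*(i,j)=c_a$ if $F(c_a)>F(c_b)$, otherwise $o^*(i,j)=c_b$. The output is $o^*(n^a,n^b)$. *)

(* Defs.v *)
From mathcomp Require Import all_boot all_order all_algebra.
Set Implicit Arguments. Unset Strict Implicit. Unset Printing Implicit Defensive.
Import Order.TTheory GRing.Theory Num.Theory.
Local Open Scope ring_scope.

(* Group a is the within-group ranking
   pa = [p^{a(1)}; ...; p^{a(n^a)}] (top first), likewise pb.  Y is the label.
   x0 is a dummy default element used only for (always in-range) nth lookups. *)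

Section XOrder.
Variables (T : eqType) (x0 : T) (Y : T -> bool) (pa pb : seq T).

Definition pA (k : nat) : T := nth x0 pa k. (* p^{a(k+1)} *)
Definition pB (h : nat) : T := nth x0 pb h. (* p^{b(h+1)} *)

Definition above (o : seq T) (u v : T) : bool := (index u o < index v o)%N.

Definition cross_ordering (o : seq T) : bool :=
  [&& perm_eq o (pa ++ pb), [seq x <- o | x \in pa] == pa
    & [seq x <- o | x \in pb] == pb].

Definition n1 : nat := count Y (pa ++ pb).
Definition n0 : nat := count (predC Y) (pa ++ pb).
Definition n1a : nat := count Y pa.
Definition n0a : nat := count (predC Y) pa.
Definition n1b : nat := count Y pb.
Definition n0b : nat := count (predC Y) pb.
Definition kk : nat := (n0 * n1)%N.
Definition kab : nat := (n1a * n0b)%N.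
Definition kba : nat := (n0a * n1b)%N.

Definition AUC (o : seq T) : rat :=
  (\sum_(u <- o) \sum_(v <- o) (Y u && ~~ Y v && above o u v : nat))%N%:R
  / (n1 * n0)%N%:R.

Definition xAUC_ab (o : seq T) : rat :=
  (\sum_(u <- pa) \sum_(v <- pb) (Y u && ~~ Y v && above o u v : nat))%N%:R
  / kab%:R.
Definition xAUC_ba (o : seq T) : rat :=
  (\sum_(u <- pb) \sum_(v <- pa) (Y u && ~~ Y v && above o u v : nat))%N%:R
  / kba%:R.
Definition DxAUC (o : seq T) : rat := `|xAUC_ab o - xAUC_ba o|.

(* H_ab, H_ba for an (i,j)-partial ordering o (0-based indices:
   k < i stands for 1 <= k+1 <= i, and "h > j" becomes j <= h). *)
Definition H_ab (i j : nat) (o : seq T) : nat :=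
  \sum_(k < i) \sum_(h < size pb)
     (Y (pA k) && ~~ Y (pB h) && ((j <= h)%N || above o (pA k) (pB h)) : nat).
Definition H_ba (i j : nat) (o : seq T) : nat :=
  \sum_(h < j) \sum_(k < size pa)
     (Y (pB h) && ~~ Y (pA k) && ((i <= k)%N || above o (pB h) (pA k)) : nat).

Definition Ghat (lambda : rat) (i j : nat) (o : seq T) : rat :=
  (H_ab i j o)%:R + (H_ba i j o)%:R
  - lambda * kk%:R * `|(H_ab i j o)%:R / kab%:R - (H_ba i j o)%:R / kba%:R|.

(* xOrder with criterion F (F i j o evaluates the (i,j)-partial ordering o). *)
Section Alg.
Variable F : nat -> nat -> seq T -> rat.

(* row i.+1 of the table, given row i (prev) *)
Fixpoint xrow (prev : nat -> seq T) (i : nat) (j : nat) : seq T :=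
  match j with
  | 0 => take i.+1 pa
  | j'.+1 =>
      let ca := rcons (prev j'.+1) (pA i) in
      let cb := rcons (xrow prev i j') (pB j') in
      if F i.+1 j'.+1 cb < F i.+1 j'.+1 ca then ca else cb
  end.

Fixpoint ostar (i : nat) : nat -> seq T :=
  match i with
  | 0 => fun j => take j pb
  | i'.+1 => xrow (ostar i') i'
  end.

Definition xOrder : seq T := ostar (size pa) (size pb).
End Alg.
End XOrder.

(* Main.v *)
Require Import Defs.
From mathcomp Require Import all_boot all_order all_algebra.
Import Order.TTheory GRing.Theory Num.Theory.
From mathcomp Require Import zify ring lra.
Set Implicit Arguments. Unset Strict Implicit. Unset Printing Implicit Defensive.

Lemma index_rcons_in (T : eqType) (o : seq T) x u : u \in o -> index u (rcons o x) = index u o.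
Proof. by move=> Hu; rewrite -cats1 index_cat Hu. Qed.

Lemma index_rcons_last (T : eqType) (o : seq T) x : x \notin o -> index x (rcons o x) = size o.
Proof. by move=> Hx; rewrite -cats1 index_cat (negbTE Hx) /= eqxx addn0. Qed.

Lemma above_rcons (T : eqType) (o : seq T) x u v : u \in o -> v \in o ->
  above (rcons o x) u v = above o u v.
Proof. by move=> Hu Hv; rewrite /above !index_rcons_in. Qed.

Lemma above_rcons_l (T : eqType) (o : seq T) x u : x \notin o -> u \in o ->
  above (rcons o x) u x.
Proof. by move=> Hx Hu; rewrite /above index_rcons_last // index_rcons_in // index_mem. Qed.

Lemma above_rcons_r (T : eqType) (o : seq T) x v : x \notin o -> v \in o ->
  above (rcons o x) x v = false.
Proof.
move=> Hx Hv; rewrite /above index_rcons_last // index_rcons_in //.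
by apply/negbTE; rewrite -leqNgt ltnW // index_mem.
Qed.
Lemma Hab_stepA (T : eqType) (x0 : T) Y (pa pb : seq T) i j o :
  (forall k, k < i -> pA x0 pa k \in o) -> (forall h, h < j -> pB x0 pb h \in o) ->
  pA x0 pa i \notin o ->
  H_ab x0 Y pa pb i.+1 j (rcons o (pA x0 pa i)) =
  H_ab x0 Y pa pb i j o + \sum_(h < size pb) (Y (pA x0 pa i) && ~~ Y (pB x0 pb h) && (j <= h) : nat).
Proof.
move=> HA HB Hx; rewrite /H_ab big_ord_recr /=; congr (_ + _).
  apply: eq_bigr => k _; apply: eq_bigr => h _.
  case: (leqP j h) => Hjh; first by rewrite !orTb.
  by rewrite /= above_rcons //; [apply: HA | apply: HB].
apply: eq_bigr => h _; case: (leqP j h) => Hjh //=.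
by rewrite above_rcons_r ?andbF //; apply: HB.
Qed.

Lemma Hab_stepB (T : eqType) (x0 : T) Y (pa pb : seq T) i j o :
  (forall k, k < i -> pA x0 pa k \in o) -> (forall h, h < j -> pB x0 pb h \in o) ->
  pB x0 pb j \notin o ->
  H_ab x0 Y pa pb i j.+1 (rcons o (pB x0 pb j)) = H_ab x0 Y pa pb i j o.
Proof.
move=> HA HB Hx; rewrite /H_ab; apply: eq_bigr => k _; apply: eq_bigr => h _.
case: (ltngtP h j) => Hjh.
- by rewrite /= above_rcons //; [apply: HA | apply: HB].
- by [].
- by rewrite /= Hjh above_rcons_l //; apply: HA.
Qed.

Inductive Pm (T : eqType) (x0 : T) (pa pb : seq T) : nat -> nat -> seq T -> Prop :=
| Pm0 : Pm x0 pa pb 0 0 [::]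
| PmA i j o : Pm x0 pa pb i j o -> i < size pa -> Pm x0 pa pb i.+1 j (rcons o (pA x0 pa i))
| PmB i j o : Pm x0 pa pb i j o -> j < size pb -> Pm x0 pa pb i j.+1 (rcons o (pB x0 pb j)).

Lemma Pm_sym (T : eqType) (x0 : T) pa pb i j o : Pm x0 pa pb i j o -> Pm x0 pb pa j i o.
Proof.
elim=> [|i' j' o' _ IH Hi|i' j' o' _ IH Hj]; first exact: Pm0.
- exact: (PmB IH Hi).
- exact: (PmA IH Hj).
Qed.

Lemma Pm_size (T : eqType) (x0 : T) pa pb i j o : Pm x0 pa pb i j o ->
  i <= size pa /\ j <= size pb.
Proof. by elim=> [|i' j' o' _ [IH1 IH2] Hi|i' j' o' _ [IH1 IH2] Hj]. Qed.

Lemma Pm_memA (T : eqType) (x0 : T) pa pb i j o : Pm x0 pa pb i j o ->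
  forall k, k < i -> pA x0 pa k \in o.
Proof.
elim=> [|i' j' o' _ IH Hi|i' j' o' _ IH Hj] k //= Hk; rewrite mem_rcons in_cons.
- by rewrite ltnS leq_eqVlt in Hk; case/orP: Hk => [/eqP->|/IH->]; rewrite ?eqxx ?orbT.
- by rewrite IH ?orbT.
Qed.

Lemma Pm_memB (T : eqType) (x0 : T) pa pb i j o : Pm x0 pa pb i j o ->
  forall h, h < j -> pB x0 pb h \in o.
Proof. by move/Pm_sym/Pm_memA. Qed.

Lemma Pm_mem (T : eqType) (x0 : T) pa pb i j o : Pm x0 pa pb i j o ->
  forall u, u \in o -> (exists2 k, k < i & u = pA x0 pa k) \/ (exists2 h, h < j & u = pB x0 pb h).
Proof.
elim=> [|i' j' o' _ IH Hi|i' j' o' _ IH Hj] u //=; rewrite mem_rcons in_cons.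
- case/orP=> [/eqP->|/IH [[k Hk ->]|[h Hh ->]]].
  + by left; exists i'.
  + by left; exists k => //; apply: ltnW.
  + by right; exists h.
- case/orP=> [/eqP->|/IH [[k Hk ->]|[h Hh ->]]].
  + by right; exists j'.
  + by left; exists k.
  + by right; exists h => //; apply: ltnW.
Qed.

Lemma Pm_notinA (T : eqType) (x0 : T) pa pb i j o : uniq pa -> ~~ has (mem pb) pa ->
  Pm x0 pa pb i j o -> i < size pa -> pA x0 pa i \notin o.
Proof.
move=> Ua D HP Hi; apply/negP => /(Pm_mem HP) [[k Hk E]|[h Hh E]].
  have Hk' : k < size pa by apply: ltn_trans Hi.
  by move: E; rewrite /pA => /eqP; rewrite nth_uniq // => /eqP E; rewrite E ltnn in Hk.
case: (Pm_size HP) => _ Hj.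
move/negP: D; apply; apply/hasP; exists (pA x0 pa i); first exact: mem_nth.
by rewrite E; apply: mem_nth; apply: leq_trans Hj.
Qed.

Lemma Pm_notinB (T : eqType) (x0 : T) pa pb i j o : uniq pb -> ~~ has (mem pb) pa ->
  Pm x0 pa pb i j o -> j < size pb -> pB x0 pb j \notin o.
Proof.
move=> Ub D HP Hj; apply: (Pm_notinA Ub _ (Pm_sym HP) Hj).
by rewrite has_sym.
Qed.

Lemma sum_D (c : bool) (F : nat -> bool) n j : j <= n ->
  \sum_(h < n) (c && F h && (j <= h) : nat) = c * \sum_(j <= h < n) (F h : nat).
Proof.
move=> Hjn; case: c; last by rewrite mul0n big1.
rewrite mul1n -(big_mkord xpredT (fun h => (true && F h && (j <= h) : nat))).
rewrite (big_cat_nat (leq0n j) Hjn) /= big_nat_cond big1 ?add0n; last first.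
  by move=> h /andP[/andP[_ H] _]; rewrite leqNgt H andbF.
by apply: eq_big_nat => h /andP[H _]; rewrite H andbT.
Qed.

Definition V (T : eqType) (x0 : T) Y pa pb i j o :=
  H_ab x0 Y pa pb i j o + H_ba x0 Y pa pb i j o.
Definition Dsum (T : eqType) (x0 : T) (Y : T -> bool) (s : seq T) j :=
  \sum_(j <= h < size s) (~~ Y (nth x0 s h) : nat).

Lemma VA (T : eqType) (x0 : T) Y pa pb i j o : uniq pa -> ~~ has (mem pb) pa ->
  Pm x0 pa pb i j o -> i < size pa ->
  V x0 Y pa pb i.+1 j (rcons o (pA x0 pa i)) = V x0 Y pa pb i j o + Y (pA x0 pa i) * Dsum x0 Y pb j.
Proof.
move=> Ua D HP Hi; have [_ Hj] := Pm_size HP.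
have HA := Pm_memA HP; have HB := Pm_memB HP; have Hx := Pm_notinA Ua D HP Hi.
rewrite /V Hab_stepA // (sum_D _ (fun h => ~~ Y (pB x0 pb h))) //.
have -> : H_ba x0 Y pa pb i.+1 j (rcons o (pA x0 pa i)) = H_ba x0 Y pa pb i j o.
  exact: (@Hab_stepB T x0 Y pb pa j i o HB HA Hx).
by rewrite addnAC.
Qed.

Lemma VB (T : eqType) (x0 : T) Y pa pb i j o : uniq pb -> ~~ has (mem pb) pa ->
  Pm x0 pa pb i j o -> j < size pb ->
  V x0 Y pa pb i j.+1 (rcons o (pB x0 pb j)) = V x0 Y pa pb i j o + Y (pB x0 pb j) * Dsum x0 Y pa i.
Proof.
move=> Ub D HP Hj; have [Hi _] := Pm_size HP.
have HA := Pm_memA HP; have HB := Pm_memB HP; have Hx := Pm_notinB Ub D HP Hj.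
rewrite /V Hab_stepB //.
have -> : H_ba x0 Y pa pb i j.+1 (rcons o (pB x0 pb j)) =
   H_ba x0 Y pa pb i j o + \sum_(h < size pa) (Y (pB x0 pb j) && ~~ Y (pA x0 pa h) && (i <= h) : nat).
  exact: (@Hab_stepA T x0 Y pb pa j i o HB HA Hx).
by rewrite (sum_D _ (fun h => ~~ Y (pA x0 pa h))) // addnA.
Qed.

Lemma Ghat0 (T : eqType) (x0 : T) Y pa pb i j o :
  Ghat x0 Y pa pb 0 i j o = ((V x0 Y pa pb i j o)%:R : rat).
Proof. by rewrite /Ghat !mul0r subr0 natrD. Qed.

Lemma Pm_takeA (T : eqType) (x0 : T) pa pb i : i <= size pa -> Pm x0 pa pb i 0 (take i pa).
Proof.
elim: i => [|i IH] Hi; first by rewrite take0; exact: Pm0.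
by rewrite (take_nth x0 Hi); apply: PmA => //; apply: IH; apply: ltnW.
Qed.

Lemma Pm_takeB (T : eqType) (x0 : T) pa pb j : j <= size pb -> Pm x0 pa pb 0 j (take j pb).
Proof. by move=> Hj; apply: Pm_sym; apply: Pm_takeA. Qed.

Lemma Pm_i0_aux (T : eqType) (x0 : T) pa pb i j o : Pm x0 pa pb i j o -> j = 0 -> o = take i pa.
Proof.
elim=> [|i' j' o' _ IH Hi|i' j' o' _ IH Hj] // E; first by rewrite take0.
by rewrite IH // (take_nth x0 Hi).
Qed.

Lemma Pm_i0 (T : eqType) (x0 : T) pa pb i o : Pm x0 pa pb i 0 o -> o = take i pa.
Proof. by move/Pm_i0_aux; apply. Qed.

Lemma Pm_0j (T : eqType) (x0 : T) pa pb j o : Pm x0 pa pb 0 j o -> o = take j pb.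
Proof. by move/Pm_sym/Pm_i0. Qed.

Lemma dp (T : eqType) (x0 : T) Y pa pb : uniq pa -> uniq pb -> ~~ has (mem pb) pa ->
  forall i, i <= size pa -> forall j, j <= size pb ->
  Pm x0 pa pb i j (ostar x0 pa pb (Ghat x0 Y pa pb 0) i j) /\
  forall o, Pm x0 pa pb i j o ->
    V x0 Y pa pb i j o <= V x0 Y pa pb i j (ostar x0 pa pb (Ghat x0 Y pa pb 0) i j).
Proof.
move=> Ua Ub D; elim=> [|i IHi] Hi j Hj.
  rewrite /=; split; first exact: Pm_takeB.
  by move=> o /Pm_0j ->.
rewrite /=; elim: j Hj => [|j IHj] Hj.
  rewrite /=; split; first exact: Pm_takeA.
  by move=> o /Pm_i0 ->.
rewrite /=.
have [Pa Ma] := IHi (ltnW Hi) j.+1 Hj.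
have [Pb Mb] := IHj (ltnW Hj).
set oa := ostar _ _ _ _ i j.+1.
set ob := Defs.xrow _ _ _ _ _ i j.
have Pca := PmA Pa Hi. have Pcb := PmB Pb Hj.
rewrite !Ghat0 ltr_nat.
have Hmax : forall o, Pm x0 pa pb i.+1 j.+1 o ->
   (V x0 Y pa pb i.+1 j.+1 o <= V x0 Y pa pb i.+1 j.+1 (rcons oa (pA x0 pa i)))
   \/ (V x0 Y pa pb i.+1 j.+1 o <= V x0 Y pa pb i.+1 j.+1 (rcons ob (pB x0 pb j))).
  move=> o Ho; inversion Ho; subst.
  - left; rewrite !VA // leq_add2r; exact: Ma.
  - right; rewrite !VB // leq_add2r; exact: Mb.
case: ifP => Hlt; (split; first by []); move=> o /Hmax [] H //.
- by apply: (leq_trans H); apply: ltnW.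
- by apply: (leq_trans H); rewrite leqNgt Hlt.
Qed.

Definition Sp (T : eqType) (Y : T -> bool) (o : seq T) :=
  \sum_(u <- o) \sum_(v <- o) (Y u && ~~ Y v && above o u v : nat).

Lemma sum_count (T : eqType) (Y : T -> bool) (o : seq T) :
  \sum_(u <- o) (Y u : nat) = count Y o.
Proof. by elim: o => [|u o IH]; rewrite ?big_nil ?big_cons //= IH. Qed.

Lemma Sp_rcons (T : eqType) (Y : T -> bool) (o : seq T) x : x \notin o ->
  Sp Y (rcons o x) = Sp Y o + ~~ Y x * count Y o.
Proof.
move=> Hx; rewrite /Sp big_rcons /= big_rcons /= andbN /= addn0.
rewrite [X in _ + X = _]big1_seq ?addn0; last first.
  by move=> v /andP[_ Hv]; rewrite above_rcons_r // andbF.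
rewrite -sum_count big_distrr /= -big_split /=.
apply: eq_big_seq => u Hu; rewrite big_rcons /= above_rcons_l //.
congr (_ + _); last by case: (Y u); case: (Y x).
by apply: eq_big_seq => v Hv; rewrite above_rcons.
Qed.

Definition cY (T : eqType) (x0 : T) (Y : T -> bool) (s : seq T) i :=
  \sum_(k < i) (Y (nth x0 s k) : nat).
Definition Wa (T : eqType) (x0 : T) (Y : T -> bool) (s : seq T) i :=
  \sum_(k < i) ~~ Y (nth x0 s k) * cY x0 Y s k.

Lemma Pm_count (T : eqType) (x0 : T) Y pa pb i j o : Pm x0 pa pb i j o ->
  count Y o = cY x0 Y pa i + cY x0 Y pb j.
Proof.
elim=> [|i' j' o' _ IH Hi|i' j' o' _ IH Hj]; first by rewrite /cY !big_ord0.
- by rewrite -cats1 count_cat IH /= /cY /pA /pB big_ord_recr /= addn0; lia.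
- by rewrite -cats1 count_cat IH /= /cY /pA /pB big_ord_recr /= addn0; lia.
Qed.

Lemma Dsum_S (T : eqType) (x0 : T) (Y : T -> bool) (s : seq T) i : i < size s ->
  Dsum x0 Y s i = ~~ Y (nth x0 s i) + Dsum x0 Y s i.+1.
Proof. by move=> Hi; rewrite /Dsum big_ltn. Qed.

Lemma ident (T : eqType) (x0 : T) Y pa pb i j o : uniq pa -> uniq pb -> ~~ has (mem pb) pa ->
  Pm x0 pa pb i j o ->
  Sp Y o + (cY x0 Y pa i * Dsum x0 Y pb j + cY x0 Y pb j * Dsum x0 Y pa i) =
  V x0 Y pa pb i j o + Wa x0 Y pa i + Wa x0 Y pb j.
Proof.
move=> Ua Ub D HP; elim: HP => [|i' j' o' HP IH Hi|i' j' o' HP IH Hj].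
- by rewrite /Sp /V /H_ab /H_ba /Wa /cY !big_ord0 big_nil.
- have [_ Hj] := Pm_size HP.
  rewrite Sp_rcons ?(Pm_notinA Ua D HP Hi) // (Pm_count Y HP) VA //.
  rewrite /Wa /cY !big_ord_recr /= -/(cY x0 Y pa i') -/(Wa x0 Y pa i') in IH *.
  rewrite (Dsum_S x0 Y Hi) in IH.
  move: IH; rewrite /pA; case: (Y (nth x0 pa i')) => /=; nia.
- have [Hi _] := Pm_size HP.
  rewrite Sp_rcons ?(Pm_notinB Ub D HP Hj) // (Pm_count Y HP) VB //.
  rewrite /Wa /cY !big_ord_recr /= -/(cY x0 Y pb j') -/(Wa x0 Y pb j') in IH *.
  rewrite (Dsum_S x0 Y Hj) in IH.
  move: IH; rewrite /pB; case: (Y (nth x0 pb j')) => /=; nia.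
Qed.

Lemma Pm_filter (T : eqType) (x0 : T) pa pb i j o : ~~ has (mem pb) pa ->
  Pm x0 pa pb i j o ->
  [/\ perm_eq o (take i pa ++ take j pb), [seq x <- o | x \in pa] = take i pa
    & [seq x <- o | x \in pb] = take j pb].
Proof.
move=> D; elim=> [|i' j' o' HP [IH1 IH2 IH3] Hi|i' j' o' HP [IH1 IH2 IH3] Hj].
- by rewrite !take0.
- have xa : pA x0 pa i' \in pa by apply: mem_nth.
  have xb : pA x0 pa i' \in pb = false.
    by apply/negP => xb; move/negP: D; apply; apply/hasP; exists (pA x0 pa i').
  rewrite !filter_rcons xa xb IH2 IH3 (take_nth x0 Hi); split => //.
  by rewrite perm_rcons -cats1 -catA perm_sym perm_catCA /= perm_cons perm_sym.
- have [Hi _] := Pm_size HP.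
  have xb : pB x0 pb j' \in pb by apply: mem_nth.
  have xa : pB x0 pb j' \in pa = false.
    apply/negP => xa; move/negP: D; apply; apply/hasP; exists (pB x0 pb j') => //.
  rewrite !filter_rcons xa xb IH2 IH3 (take_nth x0 Hj); split => //.
  by rewrite perm_rcons -[rcons (take j' pb) _]cats1 catA cats1 perm_sym perm_rcons perm_cons perm_sym.
Qed.

Lemma filter_Pm (T : eqType) (x0 : T) pa pb : ~~ has (mem pb) pa ->
  forall o i j, {in o, forall u, (u \in pa) || (u \in pb)} ->
  [seq x <- o | x \in pa] = take i pa -> [seq x <- o | x \in pb] = take j pb ->
  i <= size pa -> j <= size pb -> Pm x0 pa pb i j o.
Proof.
move=> D; elim/last_ind => [|o x IH] i j Hin Fa Fb Hi Hj.
  have Ei : i = 0 by move: (size_takel Hi); rewrite -Fa.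
  have Ej : j = 0 by move: (size_takel Hj); rewrite -Fb.
  by rewrite Ei Ej; exact: Pm0.
have Hin' : {in o, forall u, (u \in pa) || (u \in pb)}.
  by move=> u Hu; apply: Hin; rewrite mem_rcons in_cons Hu orbT.
have /orP [xa|xb] : (x \in pa) || (x \in pb) by apply: Hin; rewrite mem_rcons mem_head.
- have xb : x \in pb = false.
    by apply/negP => xb; move/negP: D; apply; apply/hasP; exists x.
  rewrite filter_rcons xa in Fa; rewrite filter_rcons xb in Fb.
  case: i Fa Hi => [|i] Fa Hi; first by move: (congr1 size Fa); rewrite size_rcons take0.
  rewrite (take_nth x0 Hi) in Fa; case/rcons_inj: Fa => F1 ->.
  by apply: PmA => //; apply: IH => //; apply: ltnW.
- have xa : x \in pa = false.
    by apply/negP => xa; move/negP: D; apply; apply/hasP; exists x.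
  rewrite filter_rcons xa in Fa; rewrite filter_rcons xb in Fb.
  case: j Fb Hj => [|j] Fb Hj; first by move: (congr1 size Fb); rewrite size_rcons take0.
  rewrite (take_nth x0 Hj) in Fb; case/rcons_inj: Fb => F1 ->.
  by apply: PmB => //; apply: IH => //; apply: ltnW.
Qed.

Local Open Scope ring_scope.
Theorem theorem1 (T : eqType) (x0 : T) (Y : T -> bool) (pa pb : seq T) :
  uniq pa -> uniq pb -> ~~ has (mem pb) pa ->
  (0 < count Y pa)%N -> (0 < count (predC Y) pa)%N ->
  (0 < count Y pb)%N -> (0 < count (predC Y) pb)%N ->
  let o := xOrder x0 pa pb (Ghat x0 Y pa pb 0) in
  cross_ordering pa pb o /\
  forall o' : seq T, cross_ordering pa pb o' -> AUC Y pa pb o' <= AUC Y pa pb o.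
Proof.
move=> Ua Ub D _ _ _ _ o.
have [Po Mo] := @dp T x0 Y pa pb Ua Ub D _ (leqnn (size pa)) _ (leqnn (size pb)).
have [C1 C2 C3] := Pm_filter D Po.
split.
  by rewrite /cross_ordering -!/(xOrder _ _ _ _) -/o C2 C3 !take_size in C1 * ; rewrite C1 !eqxx.
move=> o' /and3P [H1 /eqP H2 /eqP H3].
have Po' : Pm x0 pa pb (size pa) (size pb) o'.
  apply: filter_Pm => //; last by rewrite take_size.
  - by move=> u Hu; rewrite -mem_cat -(perm_mem H1).
  - by rewrite take_size.
have E1 := @ident T x0 Y pa pb _ _ _ Ua Ub D Po; have E2 := @ident T x0 Y pa pb _ _ _ Ua Ub D Po'.
have Hle : (Sp Y o' <= Sp Y o)%N.
  have := Mo _ Po'; rewrite /o /xOrder; lia.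
rewrite /AUC ler_wpM2r ?invr_ge0 ?ler0n //.
by rewrite ler_nat.
Qed.
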